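(* There exists a $9\times 9$ bimagic square whose $81$ entries are pairwise distinct strings of length $6$ over $\{0,1,2\}$, each being the concatenation of two $3$-digit palindromes (read as decimal numbers, leading zeros allowed), with magic sum $S1=999999$, and such that each of the nine $3\times3$ blocks has entry sum $999999$.
   Context: A magic square of order $n$ is an $n\times n$ array of numbers in which the sums of the entries of each row, of each column and of each of the two principal diagonals all equal a common value $S1$. It is bimagic if in addition the sums of the squares of the entries of each row, each column and each of the two principal diagonals all equal a common value $S2$. The $3\times3$ blocks are the subarrays with rows $3p+1,\dots,3p+3$ and columns $3q+1,\dots,3q+3$, $p,q\in\{0,1,2\}$. *)

(* Defs.v *)
From mathcomp Require Import all_boot.
Set Implicit Arguments. Unset Strict Implicit. Unset Printing Implicit Defensive.

Definition decval (s : seq 'I_3) : nat :=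
  foldl (fun acc (d : 'I_3) => acc * 10 + nat_of_ord d) 0 s.

Definition is_pal (s : seq 'I_3) : bool := rev s == s.

Definition pal_pair (s : 6.-tuple 'I_3) : bool :=
  is_pal (take 3 s) && is_pal (drop 3 s).

Definition is_magic (n : nat) (A : 'I_n -> 'I_n -> nat) (S : nat) : Prop :=
  (forall i : 'I_n, \sum_(j < n) A i j = S) /\
  (forall j : 'I_n, \sum_(i < n) A i j = S) /\
  \sum_(i < n) A i i = S /\
  \sum_(i < n) A i (rev_ord i) = S.

Definition is_bimagic (n : nat) (A : 'I_n -> 'I_n -> nat) (S1 S2 : nat) : Prop :=
  is_magic A S1 /\ is_magic (fun i j => A i j ^ 2) S2.

(* Main.v *)
Require Import Defs.
From mathcomp Require Import all_boot.
From Stdlib Require Import NArith.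

Definition lf (c0 c1 c2 c3 k : nat) (i j : nat) : 'I_3 :=
  Ordinal (ltn_pmod (c0 * (i %/ 3) + c1 * (i %% 3) + c2 * (j %/ 3) + c3 * (j %% 3) + k)
    (isT : 0 < 3)).

Definition MxN (i j : nat) : 6.-tuple 'I_3 :=
  let a := lf 2 2 0 1 0 i j in
  let b := lf 1 2 2 0 0 i j in
  let c := lf 2 0 2 1 1 i j in
  let d := lf 0 1 1 1 0 i j in
  [tuple a; b; a; c; d; c].

Definition Mx (i j : 'I_9) : 6.-tuple 'I_3 := MxN i j.

Definition code (t : 6.-tuple 'I_3) : nat :=
  match val t with
  | [:: a; b; _; c; d; _] => a * 27 + b * 9 + c * 3 + d
  | _ => 0 end.

Definition I9 := iota 0 9.
Definition I3 := iota 0 3.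

Definition tab : seq nat := [seq code (MxN i j) | i <- I9, j <- I9].

Lemma tab_uniq : uniq tab.
Proof. by vm_compute. Qed.

Lemma tab_nth_all : all (fun i => all (fun j => nth 0 tab (i * 9 + j) == code (MxN i j)) I9) I9.
Proof. by vm_compute. Qed.

Lemma nbD a b : nat_of_bin (N.add a b) = nat_of_bin a + nat_of_bin b.
Proof. by case: a; case: b => //= [p|p q]; rewrite ?addn0 // nat_of_add_pos. Qed.
Lemma nbM a b : nat_of_bin (N.mul a b) = nat_of_bin a * nat_of_bin b.
Proof. by case: a; case: b => //= [p|p q]; rewrite ?muln0 // nat_of_mul_pos. Qed.

Definition decN (s : seq 'I_3) : N :=
  foldl (fun acc (d : 'I_3) => N.add (N.mul acc 10%num) (bin_of_nat d)) 0%num s.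

Lemma decval_gen (s : seq 'I_3) (a : nat) (b : N) : a = nat_of_bin b ->
  foldl (fun acc (d : 'I_3) => acc * 10 + nat_of_ord d) a s =
  nat_of_bin (foldl (fun acc (d : 'I_3) => N.add (N.mul acc 10%num) (bin_of_nat d)) b s).
Proof.
elim: s a b => //= d s IH a b E.
by apply: IH; rewrite nbD nbM bin_of_natK -E.
Qed.

Lemma decval_N s : decval s = nat_of_bin (decN s).
Proof. exact: decval_gen. Qed.

Definition VN (i j : nat) := decN (MxN i j).
Definition SNn (n : nat) (F : nat -> N) := foldr (fun k acc => N.add (F k) acc) 0%num (iota 0 n).

Lemma sumN n (F : nat -> N) : \sum_(k < n) nat_of_bin (F k) = nat_of_bin (SNn n F).
Proof.
rewrite -(big_mkord xpredT (fun k => nat_of_bin (F k))) /SNn /index_iota subn0.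
elim: (iota 0 n) => [|x s IH]; by rewrite ?big_nil ?big_cons //= nbD IH.
Qed.

Lemma sqN x : nat_of_bin x ^ 2 = nat_of_bin (N.mul x x).
Proof. by rewrite nbM. Qed.

Lemma c1 : nat_of_bin 999999%num = 999999.
Proof. by apply/eqP; vm_compute. Qed.

Lemma chk1 : all (fun i => N.eqb (SNn 9 (fun j => VN i j)) 999999%num) I9.
Proof. by vm_compute. Qed.
Lemma chk2 : all (fun j => N.eqb (SNn 9 (fun i => VN i j)) 999999%num) I9.
Proof. by vm_compute. Qed.
Lemma chk3 : all (fun i => N.eqb (SNn 9 (fun j => N.mul (VN i j) (VN i j))) 172916950695%num) I9.
Proof. by vm_compute. Qed.
Lemma chk4 : all (fun j => N.eqb (SNn 9 (fun i => N.mul (VN i j) (VN i j))) 172916950695%num) I9.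
Proof. by vm_compute. Qed.
Lemma chk5 : [&& N.eqb (SNn 9 (fun i => VN i i)) 999999%num,
  N.eqb (SNn 9 (fun i => VN i (9 - i.+1))) 999999%num,
  N.eqb (SNn 9 (fun i => N.mul (VN i i) (VN i i))) 172916950695%num &
  N.eqb (SNn 9 (fun i => N.mul (VN i (9 - i.+1)) (VN i (9 - i.+1)))) 172916950695%num].
Proof. by vm_compute. Qed.
Lemma chk6 : all (fun p => all (fun q => N.eqb (SNn 3 (fun r => SNn 3 (fun c =>
          VN (3 * p + r) (3 * q + c)))) 999999%num) I3) I3.
Proof. by vm_compute. Qed.
Lemma chk7 : all (fun i => all (fun j => pal_pair (MxN i j)) I9) I9.
Proof. by vm_compute. Qed.

Lemma eqbN a b : N.eqb a b -> nat_of_bin a = nat_of_bin b.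
Proof. by move/N.eqb_eq => ->. Qed.
Arguments eqbN {a b}.

Lemma inI (i : 'I_9) : nat_of_ord i \in I9.
Proof. by rewrite mem_iota ltn_ord. Qed.
Lemma inJ (i : 'I_3) : nat_of_ord i \in I3.
Proof. by rewrite mem_iota ltn_ord. Qed.

Theorem mainTheorem5 :
  exists (M : 'I_9 -> 'I_9 -> 6.-tuple 'I_3) (S2 : nat),
    (forall i j i' j' : 'I_9, M i j = M i' j' -> i = i' /\ j = j') /\
    (forall i j : 'I_9, pal_pair (M i j)) /\
    is_bimagic (fun i j => decval (M i j)) 999999 S2 /\
    (forall p q : 'I_3,
       \sum_(r < 3) \sum_(c < 3)
          decval (M (inord (3 * p + r)) (inord (3 * q + c))) = 999999).
Proof.
exists Mx, (nat_of_bin 172916950695%num).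
have tab_nth (i j : 'I_9) : nth 0 tab (i * 9 + j) = code (Mx i j).
  by apply/eqP; move/allP: tab_nth_all => /(_ _ (inI i)) /allP /(_ _ (inI j)).
split.
  move=> i j i' j' E.
  have H : nth 0 tab (i * 9 + j) = nth 0 tab (i' * 9 + j') by rewrite !tab_nth E.
  have sz : size tab = 81 by vm_compute.
  have lt : forall (a b : 'I_9), a * 9 + b < 81.
    move=> a b; apply: (@leq_trans (8 * 9 + 9)) => //.
    rewrite -addnS leq_add //.
    by rewrite leq_mul2r -ltnS ltn_ord orbT.
  move/eqP: H; rewrite nth_uniq ?sz ?lt ?tab_uniq // => /eqP H.
  have e1 := congr1 (fun x => x %/ 9) H; have e2 := congr1 (fun x => x %% 9) H.
  move: e1 e2 => /=; rewrite !divnMDl // !modnMDl !divn_small ?modn_small ?ltn_ord // !addn0.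
  by move=> /val_inj e1 /val_inj e2.
split; first by move=> i j; move/allP: chk7 => /(_ _ (inI i)) /allP /(_ _ (inI j)).
have E (i j : 'I_9) : decval (Mx i j) = nat_of_bin (VN i j) by rewrite decval_N.
split; last first.
  move=> p q; rewrite -c1.
  move/allP: chk6 => /(_ _ (inJ p)) /allP /(_ _ (inJ q)) /eqbN <-.
  rewrite -sumN; apply: eq_bigr => r _.
  rewrite -sumN; apply: eq_bigr => c _.
  have l1 : 3 * p + r < 9.
    apply: (@leq_trans (3 * 2 + 3)) => //.
    rewrite -addnS leq_add //.
    by rewrite leq_mul2l -ltnS ltn_ord orbT.
  have l2 : 3 * q + c < 9.
    apply: (@leq_trans (3 * 2 + 3)) => //.
    rewrite -addnS leq_add //.
    by rewrite leq_mul2l -ltnS ltn_ord orbT.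
  by rewrite E !inordK.
move/and4P: chk5 => [/eqbN d1 /eqbN d2 /eqbN d3 /eqbN d4].
split; split.
- move=> i; rewrite -c1 -(eqbN (allP chk1 _ (inI i))) -sumN.
  by apply: eq_bigr => j _; rewrite E.
- split.
    move=> j; rewrite -c1 -(eqbN (allP chk2 _ (inI j))) -sumN.
    by apply: eq_bigr => i _; rewrite E.
  split; [rewrite -c1 -d1 | rewrite -c1 -d2]; rewrite -sumN; by apply: eq_bigr => i _; rewrite E.
- move=> i; rewrite -(eqbN (allP chk3 _ (inI i))) -sumN.
  by apply: eq_bigr => j _; rewrite E sqN.
- split.
    move=> j; rewrite -(eqbN (allP chk4 _ (inI j))) -sumN.
    by apply: eq_bigr => i _; rewrite E sqN.
  split; [rewrite -d3 | rewrite -d4]; rewrite -sumN; by apply: eq_bigr => i _; rewrite E sqN.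
Qed.
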